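(* Consider the wound-string system $\ddot x_1+2G^1(x,\dot x)=0$, $\ddot x_2+2G^2(x,\dot x)=0$ with $$G^1=\frac{x_1}{2a^2x_1^2+2m^2x_2^2}\Big[a^2(1-y_1^2)-y_2^2-C^2\frac{(a^2x_1^2+m^2x_2^2)^2}{x_1^4x_2^2}\Big],\quad G^2=\frac{x_2}{2a^2x_1^2+2m^2x_2^2}\Big[m^2\big(a^2(1-y_1^2)-y_2^2\big)-a^2C^2\frac{(a^2x_1^2+m^2x_2^2)^2}{x_1^2x_2^4}\Big],$$ where $y_i=\dot x_i$ and $a,C,m$ are real parameters with $0<a^2\le 1$. Then for no such parameter values does the system have exactly one, exactly two, or exactly three Jacobi stable fixed points; and whenever $m\neq0$, $C\neq 0$ and $a^2\neq 1$, the system has exactly four Jacobi stable fixed points.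
   Context: Fixed points are points $(x_1,x_2)$ with $x_1\neq0$, $x_2\neq0$ such that $G^1(x,0)=G^2(x,0)=0$. Einstein summation is used. $N^i_j=\partial G^i/\partial y_j$, $G^i_{j\ell}=\partial N^i_j/\partial y_\ell$, and the deviation curvature tensor is $P^i_j=-2\frac{\partial G^i}{\partial x_j}-2G^\ell G^i_{j\ell}+y_\ell\frac{\partial N^i_j}{\partial x_\ell}+N^i_\ell N^\ell_j$. A fixed point $\bar x$ is Jacobi stable if all eigenvalues of the $2\times2$ matrix $(P^i_j)$ evaluated at $(x,y)=(\bar x,0)$ have strictly negative real parts. *)

(* Defs.v *)
From Stdlib Require Import Reals List.
From Coquelicot Require Import Coquelicot.
Import ListNotations.
Open Scope R_scope.

(* Functions of (x1, x2, y1, y2). *)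
Definition F4 := R -> R -> R -> R -> R.

Definition dx (j : nat) (f : F4) : F4 := fun x1 x2 y1 y2 =>
  match j with
  | 1%nat => Derive (fun t => f t x2 y1 y2) x1
  | _ => Derive (fun t => f x1 t y1 y2) x2
  end.
Definition dy (j : nat) (f : F4) : F4 := fun x1 x2 y1 y2 =>
  match j with
  | 1%nat => Derive (fun t => f x1 x2 t y2) y1
  | _ => Derive (fun t => f x1 x2 y1 t) y2
  end.

Definition sum12 (g : nat -> R) : R := g 1%nat + g 2%nat.

Definition G1 (a c m : R) : F4 := fun x1 x2 y1 y2 =>
  x1 / (2 * a^2 * x1^2 + 2 * m^2 * x2^2) *
  (a^2 * (1 - y1^2) - y2^2
   - c^2 * (a^2 * x1^2 + m^2 * x2^2)^2 / (x1^4 * x2^2)).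
Definition G2 (a c m : R) : F4 := fun x1 x2 y1 y2 =>
  x2 / (2 * a^2 * x1^2 + 2 * m^2 * x2^2) *
  (m^2 * (a^2 * (1 - y1^2) - y2^2)
   - a^2 * c^2 * (a^2 * x1^2 + m^2 * x2^2)^2 / (x1^2 * x2^4)).

Definition G (a c m : R) (i : nat) : F4 :=
  match i with 1%nat => G1 a c m | _ => G2 a c m end.

Definition yv (l : nat) (y1 y2 : R) : R :=
  match l with 1%nat => y1 | _ => y2 end.

Definition N (a c m : R) (i j : nat) : F4 := dy j (G a c m i).
Definition Gc (a c m : R) (i j l : nat) : F4 := dy l (N a c m i j).

Definition P (a c m : R) (i j : nat) : F4 := fun x1 x2 y1 y2 =>
  - 2 * dx j (G a c m i) x1 x2 y1 y2
  - 2 * sum12 (fun l => G a c m l x1 x2 y1 y2 * Gc a c m i j l x1 x2 y1 y2)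
  + sum12 (fun l => yv l y1 y2 * dx l (N a c m i j) x1 x2 y1 y2)
  + sum12 (fun l => N a c m i l x1 x2 y1 y2 * N a c m l j x1 x2 y1 y2).

Definition fixed_point (a c m : R) (p : R * R) : Prop :=
  fst p <> 0 /\ snd p <> 0 /\
  G1 a c m (fst p) (snd p) 0 0 = 0 /\ G2 a c m (fst p) (snd p) 0 0 = 0.

Definition is_eigenvalue_P (a c m : R) (p : R * R) (lam : C) : Prop :=
  let Pij i j := RtoC (P a c m i j (fst p) (snd p) 0 0) in
  Cminus (Cmult (Cminus (Pij 1%nat 1%nat) lam) (Cminus (Pij 2%nat 2%nat) lam))
         (Cmult (Pij 1%nat 2%nat) (Pij 2%nat 1%nat)) = RtoC 0.

Definition jacobi_stable (a c m : R) (p : R * R) : Prop :=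
  forall lam : C, is_eigenvalue_P a c m p lam -> Re lam < 0.

Definition jacobi_stable_fixed_point (a c m : R) (p : R * R) : Prop :=
  fixed_point a c m p /\ jacobi_stable a c m p.

Definition exactly_k_stable (a c m : R) (k : nat) : Prop :=
  exists l : list (R * R), NoDup l /\ length l = k /\
    forall p, In p l <-> jacobi_stable_fixed_point a c m p.

(* Main.v *)
Require Import Defs.
From Stdlib Require Import Reals List Lra Lia.
From Coquelicot Require Import Coquelicot.
Import ListNotations.
Open Scope R_scope.

Ltac nz := match goal with
 | |- _ /\ _ => split; nz
 | |- True => exact I
 | |- _ => try assumption; try (repeat apply Rmult_integral_contrapositive_currified; try assumption; lra);
     try (apply Rgt_not_eq; apply Rlt_gt; repeat apply Rmult_lt_0_compat; nra)
end.

Ltac dtac a x1 x2 :=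
  auto_derive;
  try replace (a*(a*1)*(x1*(x1*1))/(x2*(x2*1))*(x2*(x2*1))) with (a*(a*1)*(x1*(x1*1))) by (field; auto);
  try replace (2*(a*(a*1)*(x1*(x1*1))/(x2*(x2*1)))*(x2*(x2*1))) with (2*(a*(a*1)*(x1*(x1*1)))) by (field; auto);
  [ nz | field; nz ].

Lemma d11 a c m x1 x2 : a <> 0 -> x1 <> 0 -> x2 <> 0 ->
  c^2 = x2^2/(4*a^2) -> m^2 = a^2*x1^2/x2^2 ->
  Derive (fun t => G1 a c m t x2 0 0) x1 = 1/(2*x1^2).
Proof.
  intros Ha H1 H2 Hc Hm.
  assert (Ea: a*a>0) by (apply Rsqr_pos_lt; auto).
  assert (E1: x1*x1>0) by (apply Rsqr_pos_lt; auto).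
  assert (E2: x2*x2>0) by (apply Rsqr_pos_lt; auto).
  apply is_derive_unique. unfold G1. rewrite Hc, Hm.
  auto_derive;
  replace (a*(a*1)*(x1*(x1*1))/(x2*(x2*1))*(x2*(x2*1))) with (a*(a*1)*(x1*(x1*1))) by (field; auto);
  replace (2*(a*(a*1)*(x1*(x1*1))/(x2*(x2*1)))*(x2*(x2*1))) with (2*(a*(a*1)*(x1*(x1*1)))) by (field; auto).
  - nz.
  - field; nz.
Qed.

Section S.
Variables a c m x1 x2 : R.
Hypotheses (Ha : a <> 0) (H1 : x1 <> 0) (H2 : x2 <> 0)
  (Hc : c^2 = x2^2/(4*a^2)) (Hm : m^2 = a^2*x1^2/x2^2).
Let Ea: a*a>0. Proof. apply Rsqr_pos_lt; auto. Qed.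
Let E1: x1*x1>0. Proof. apply Rsqr_pos_lt; auto. Qed.
Let E2: x2*x2>0. Proof. apply Rsqr_pos_lt; auto. Qed.

Lemma d12 : Derive (fun t => G1 a c m x1 t 0 0) x2 = 0.
Proof. apply is_derive_unique. unfold G1. rewrite Hc, Hm. dtac a x1 x2. Qed.
Lemma d21 : Derive (fun t => G2 a c m t x2 0 0) x1 = 0.
Proof. apply is_derive_unique. unfold G2. rewrite Hc, Hm. dtac a x1 x2. Qed.
Lemma d22 : Derive (fun t => G2 a c m x1 t 0 0) x2 = a^2/(2*x2^2).
Proof. apply is_derive_unique. unfold G2. rewrite Hc, Hm. dtac a x1 x2. Qed.
End S.
Lemma fp_rel a c m x1 x2 : 0 < a^2 -> fixed_point a c m (x1,x2) ->
  x1 <> 0 /\ x2 <> 0 /\ x2^2 = 4*c^2*a^2 /\ a^2*x1^2 = m^2*x2^2.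
Proof.
  intros Ha [H1 [H2 [G1z G2z]]]; cbn [fst snd] in *.
  assert (E1: x1^2>0) by (apply pow2_gt_0; auto).
  assert (E2: x2^2>0) by (apply pow2_gt_0; auto).
  assert (Em: m^2>=0) by (apply Rle_ge, pow2_ge_0).
  assert (Ec: c^2>=0) by (apply Rle_ge, pow2_ge_0).
  assert (HD: 2 * a^2 * x1^2 + 2 * m^2 * x2^2 <> 0) by (apply Rgt_not_eq; nra).
  unfold G1, G2 in *.
  set (S := a ^ 2 * x1 ^ 2 + m ^ 2 * x2 ^ 2) in *.
  set (D := 2 * a^2 * x1^2 + 2 * m^2 * x2^2) in *.
  assert (F1 : a^2*x1^4*x2^2 = c^2*S^2).
  { apply Rmult_integral in G1z as [G|G].
    - exfalso. unfold Rdiv in G. apply Rmult_integral in G as [G|G]; auto.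
      apply Rinv_neq_0_compat in HD; auto.
    - apply Rminus_diag_uniq.
      replace (a^2*x1^4*x2^2 - c^2*S^2) with
        ((a ^ 2 * (1 - 0 ^ 2) - 0 ^ 2 - c ^ 2 * S ^ 2 / (x1 ^ 4 * x2 ^ 2))*(x1^4*x2^2)).
      rewrite G; ring. field. repeat split; try apply pow_nonzero; auto. }
  assert (F2 : m^2*x1^2*x2^4 = c^2*S^2).
  { apply Rmult_integral in G2z as [G|G].
    - exfalso. unfold Rdiv in G. apply Rmult_integral in G as [G|G]; auto.
      apply Rinv_neq_0_compat in HD; auto.
    - apply (Rmult_eq_reg_l (a^2)); [| lra]. apply Rminus_diag_uniq.
      replace (a^2*(m^2*x1^2*x2^4) - a^2*(c^2*S^2)) with
        ((m ^ 2 * (a ^ 2 * (1 - 0 ^ 2) - 0 ^ 2) - a ^ 2 * c ^ 2 * S ^ 2 / (x1 ^ 2 * x2 ^ 4))*(x1^2*x2^4)).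
      rewrite G; ring. field. repeat split; try apply pow_nonzero; auto. }
  assert (F3 : a^2*x1^2 = m^2*x2^2).
  { assert (Z: x1^2*x2^2*(a^2*x1^2 - m^2*x2^2) = 0).
    { replace (x1^2*x2^2*(a^2*x1^2 - m^2*x2^2)) with (a^2*x1^4*x2^2 - m^2*x1^2*x2^4) by ring.
      rewrite F1, F2; ring. }
    apply Rmult_integral in Z as [Z|Z]; [nra|lra]. }
  repeat split; auto.
  assert (HS: S = 2*a^2*x1^2) by (unfold S; lra).
  rewrite HS in F1.
  apply (Rmult_eq_reg_l (a^2*x1^4)); [|apply Rmult_integral_contrapositive_currified; [lra| apply pow_nonzero; auto]].
  replace (a^2*x1^4*x2^2) with (a^2*x1^4*x2^2) in F1 by ring.
  rewrite <- Rmult_assoc, F1. ring.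
Qed.
Lemma eig (p q : R) (lam : C): p<0 -> q<0 ->
  Cminus (Cmult (Cminus (RtoC p) lam) (Cminus (RtoC q) lam)) (Cmult (RtoC 0) (RtoC 0)) = RtoC 0 -> Re lam < 0.
Proof.
  intros Hp Hq H. destruct lam as [u v].
  unfold Cminus, Cmult, Copp, Cplus, RtoC, Re in *. simpl in *.
  injection H as H1 H2.
  assert (Hi: v*(p+q-2*u) = 0) by lra.
  apply Rmult_integral in Hi as [Hv|Hv].
  - subst v. assert (Z: (p-u)*(q-u) = 0) by lra.
    apply Rmult_integral in Z as [Z|Z]; lra.
  - lra.
Qed.

Lemma Nz a c m x1 x2 i j : a <> 0 -> x1 <> 0 -> x2 <> 0 ->
  Defs.N a c m i j x1 x2 0 0 = 0.
Proof.
  intros Ha H1 H2.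
  assert (Ea: a*a>0) by (apply Rsqr_pos_lt; auto).
  assert (E1: x1*x1>0) by (apply Rsqr_pos_lt; auto).
  assert (E2: x2*x2>0) by (apply Rsqr_pos_lt; auto).
  assert (Em: m*m>=0) by (apply Rle_ge, Rle_0_sqr).
  unfold Defs.N, dy.
  destruct i as [|[|i]]; destruct j as [|[|j]]; cbn [G];
    apply is_derive_unique; unfold G1, G2; auto_derive;
    first [nz | field; nz].
Qed.

Lemma Pval a c m x1 x2 : a <> 0 -> x1 <> 0 -> x2 <> 0 ->
  c^2 = x2^2/(4*a^2) -> m^2 = a^2*x1^2/x2^2 ->
  G1 a c m x1 x2 0 0 = 0 -> G2 a c m x1 x2 0 0 = 0 ->
  P a c m 1 1 x1 x2 0 0 = -2*(1/(2*x1^2)) /\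
  P a c m 1 2 x1 x2 0 0 = 0 /\
  P a c m 2 1 x1 x2 0 0 = 0 /\
  P a c m 2 2 x1 x2 0 0 = -2*(a^2/(2*x2^2)).
Proof.
  intros Ha H1 H2 Hc Hm G1z G2z.
  unfold P, sum12, dx. cbn [G yv].
  rewrite G1z, G2z, !(Nz a c m x1 x2) by auto.
  rewrite (d11 a c m x1 x2), (d12 a c m x1 x2), (d21 a c m x1 x2), (d22 a c m x1 x2) by auto.
  repeat split; ring.
Qed.

Lemma fp_of_rel a c m x1 x2 : a <> 0 -> x1 <> 0 -> x2 <> 0 ->
  c^2 = x2^2/(4*a^2) -> m^2 = a^2*x1^2/x2^2 -> fixed_point a c m (x1,x2).
Proof.
  intros Ha H1 H2 Hc Hm.
  assert (Ea: a*a>0) by (apply Rsqr_pos_lt; auto).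
  assert (E1: x1*x1>0) by (apply Rsqr_pos_lt; auto).
  assert (E2: x2*x2>0) by (apply Rsqr_pos_lt; auto).
  unfold fixed_point, G1, G2; cbn [fst snd]. rewrite Hc, Hm.
  repeat split; auto.
  - field. nz.
  - field. nz.
Qed.

Lemma rels a c m x1 x2 : 0 < a^2 -> fixed_point a c m (x1,x2) ->
  a <> 0 /\ x1 <> 0 /\ x2 <> 0 /\ c^2 = x2^2/(4*a^2) /\ m^2 = a^2*x1^2/x2^2.
Proof.
  intros Ha F. destruct (fp_rel a c m x1 x2 Ha F) as [H1 [H2 [R1 R2]]].
  assert (Ha' : a <> 0) by (intro Z; subst a; lra).
  repeat split; auto.
  - rewrite R1. field. auto.
  - rewrite R2. field. auto.
Qed.

Lemma fp_stable a c m p : 0 < a^2 -> fixed_point a c m p -> jacobi_stable a c m p.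
Proof.
  intros Ha F. destruct p as [x1 x2].
  destruct (rels a c m x1 x2 Ha F) as [Ha' [H1 [H2 [Hc Hm]]]].
  destruct F as [_ [_ [G1z G2z]]]. cbn [fst snd] in *.
  destruct (Pval a c m x1 x2 Ha' H1 H2 Hc Hm G1z G2z) as [P11 [P12 [P21 P22]]].
  unfold jacobi_stable, is_eigenvalue_P. cbn [fst snd].
  rewrite P11, P12, P21, P22. intros lam Hl.
  assert (E1: x1^2>0) by (apply pow2_gt_0; auto).
  assert (E2: x2^2>0) by (apply pow2_gt_0; auto).
  apply (eig (-2*(1/(2*x1^2))) (-2*(a^2/(2*x2^2)))); auto.
  - assert (0 < 1/(2*x1^2)) by (apply Rdiv_lt_0_compat; lra). lra.
  - assert (0 < a^2/(2*x2^2)) by (apply Rdiv_lt_0_compat; lra). lra.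
Qed.

Lemma sq_eq x y : x^2 = y^2 -> x = y \/ x = -y.
Proof.
  intro H. assert (Z: (x-y)*(x+y) = 0) by nra.
  apply Rmult_integral in Z as [Z|Z]; [left|right]; lra.
Qed.

Definition L4 (a c m : R) : list (R*R) :=
  [(2*c*m, 2*c*a); (2*c*m, -(2*c*a)); (-(2*c*m), 2*c*a); (-(2*c*m), -(2*c*a))].

Lemma fp_in a c m p : 0 < a^2 -> fixed_point a c m p -> In p (L4 a c m).
Proof.
  intros Ha F. destruct p as [x1 x2].
  destruct (fp_rel a c m x1 x2 Ha F) as [H1 [H2 [R1 R2]]].
  assert (A1 : x1^2 = (2*c*m)^2).
  { apply (Rmult_eq_reg_l (a^2)); [|lra]. rewrite R2, R1. ring. }
  assert (A2 : x2^2 = (2*c*a)^2) by (rewrite R1; ring).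
  apply sq_eq in A1. apply sq_eq in A2. unfold L4; simpl.
  destruct A1 as [->| ->]; destruct A2 as [->| ->]; tauto.
Qed.

Lemma in_fp a c m p : 0 < a^2 -> c <> 0 -> m <> 0 -> In p (L4 a c m) -> fixed_point a c m p.
Proof.
  intros Ha Hc Hm Hin.
  assert (Ha' : a <> 0) by (intro Z; subst a; lra).
  assert (X1 : 2*c*m <> 0) by nz.
  assert (X2 : 2*c*a <> 0) by nz.
  unfold L4 in Hin; simpl in Hin.
  repeat destruct Hin as [<- | Hin]; try contradiction;
  apply fp_of_rel; auto; try (apply Ropp_neq_0_compat; auto); field; auto.
Qed.

Lemma L4_nodup a c m : 0 < a^2 -> c <> 0 -> m <> 0 -> NoDup (L4 a c m).
Proof.
  intros Ha Hc Hm.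
  assert (Ha' : a <> 0) by (intro Z; subst a; lra).
  assert (X1 : 2*c*m <> 0) by nz.
  assert (X2 : 2*c*a <> 0) by nz.
  unfold L4. repeat constructor; simpl; intuition;
  match goal with H : (_,_) = (_,_) |- _ => injection H; intros; lra end.
Qed.

Lemma key a c m p : 0 < a^2 -> (jacobi_stable_fixed_point a c m p <-> fixed_point a c m p).
Proof.
  intros Ha. split; [intros [F _]; exact F | intro F; split; auto; apply fp_stable; auto].
Qed.

Lemma not_small a c m k : 0 < a^2 -> (1 <= k <= 3)%nat -> ~ exactly_k_stable a c m k.
Proof.
  intros Ha Hk [l [Hnd [Hlen Hl]]].
  destruct l as [|p l']; [simpl in Hlen; lia|].
  assert (Fp : fixed_point a c m p) by (apply (key a c m p Ha), Hl; left; auto).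
  destruct p as [x1 x2].
  destruct (fp_rel a c m x1 x2 Ha Fp) as [H1 [H2 [R1 R2]]].
  assert (E1: x1^2>0) by (apply pow2_gt_0; auto).
  assert (E2: x2^2>0) by (apply pow2_gt_0; auto).
  assert (Hc : c <> 0) by (intro Z; subst c; nra).
  assert (Hm : m <> 0) by (intro Z; subst m; nra).
  assert (Inc : incl (L4 a c m) ((x1,x2)::l')).
  { intros q Hq. apply Hl, (key a c m q Ha). apply in_fp; auto. }
  pose proof (NoDup_incl_length (L4_nodup a c m Ha Hc Hm) Inc) as Hle.
  rewrite Hlen in Hle. simpl in Hle. lia.
Qed.

Theorem theorem4p1 :
  forall a c m : R, 0 < a^2 -> a^2 <= 1 ->
    ~ exactly_k_stable a c m 1 /\ ~ exactly_k_stable a c m 2 /\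
    ~ exactly_k_stable a c m 3 /\
    (m <> 0 -> c <> 0 -> a^2 <> 1 -> exactly_k_stable a c m 4).
Proof.
  intros a c m Ha _.
  repeat split; try (apply not_small; auto; lia).
  intros Hm Hc _.
  exists (L4 a c m). split; [apply L4_nodup; auto|]. split; [reflexivity|].
  intro p. rewrite (key a c m p Ha). split.
  - apply in_fp; auto.
  - apply fp_in; auto.
Qed.
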